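(* Let $\psi:[0,1]\to[0,1]$ be a convex, strictly increasing, surjective, three times differentiable function with $\psi'>0$ on $(0,1]$ such that $x\psi'(x)/\psi(x)$ and $x\psi''(x)/\psi'(x)$ are strictly increasing on $(0,1]$. Let $n\ge2$ and for $r\ge0$ let $\phi_*(r)=\min\{\|(y,r)\|_\psi:\ y\in\mathbb R_+^{n-1},\ \|y\|_\psi=1\}$. Then $\phi_*(r)=\|(1,r)\|_\psi$ for all $r\ge0$, where $(1,r)\in\mathbb R^2$.
   Context: For $\psi:[0,1]\to[0,1]$ a continuous strictly increasing bijection and $v\in\mathbb R^k$ (any $k$), $\|v\|_\psi$ is $0$ if $v=0$ and otherwise the unique $s>0$ with $\sum_{i=1}^k\psi(|v_i|/s)=1$. $(y,r)\in\mathbb R^n$ denotes $y$ with $r$ appended. *)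

(* Defs.v *)
From Stdlib Require Import Reals List ClassicalEpsilon.
Import ListNotations.
Open Scope R_scope.

Definition I01 (x : R) : Prop := 0 <= x <= 1.

Definition deriv_within (f : R -> R) (D : R -> Prop) (x l : R) : Prop :=
  forall eps, 0 < eps -> exists delta, 0 < delta /\
    forall h, h <> 0 -> Rabs h < delta -> D (x + h) ->
      Rabs ((f (x + h) - f x) / h - l) < eps.

(* psi_norm_rel psi v s : s is ||v||_psi, i.e. s = 0 if v = 0, otherwise
   s > 0 is such that sum_i psi(|v_i|/s) = 1 (with all |v_i|/s in the
   domain [0,1] of psi). *)
Definition psi_norm_rel (psi : R -> R) (v : list R) (s : R) : Prop :=
  ((forall x, In x v -> x = 0) /\ s = 0) \/
  ((exists x, In x v /\ x <> 0) /\ 0 < s /\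
   (forall x, In x v -> Rabs x / s <= 1) /\
   fold_right Rplus 0 (map (fun x => psi (Rabs x / s)) v) = 1).

Definition psi_norm (psi : R -> R) (v : list R) : R :=
  epsilon (inhabits 0) (psi_norm_rel psi v).

(* Main.v *)
Require Import Defs.
From Stdlib Require Import Reals List Lra Lia Classical ClassicalEpsilon.
Import ListNotations.
Open Scope R_scope.

Lemma psi0 (psi : R -> R) :
  (forall x, I01 x -> I01 (psi x)) ->
  (forall y, I01 y -> exists x, I01 x /\ psi x = y) ->
  (forall x y, I01 x -> I01 y -> x < y -> psi x < psi y) -> psi 0 = 0.
Proof.
  intros Hin Hs Hi. destruct (Hs 0) as [x [Hx Hpx]]. unfold I01; lra.
  destruct (Req_dec x 0) as [->|Hn]; auto.
  assert (psi 0 < psi x) by (apply Hi; unfold I01 in *; lra).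
  assert (I01 (psi 0)) by (apply Hin; unfold I01; lra). unfold I01 in *; lra.
Qed.

Lemma psi1 (psi : R -> R) :
  (forall x, I01 x -> I01 (psi x)) ->
  (forall y, I01 y -> exists x, I01 x /\ psi x = y) ->
  (forall x y, I01 x -> I01 y -> x < y -> psi x < psi y) -> psi 1 = 1.
Proof.
  intros Hin Hs Hi. destruct (Hs 1) as [x [Hx Hpx]]. unfold I01; lra.
  destruct (Req_dec x 1) as [->|Hn]; auto.
  assert (psi x < psi 1) by (apply Hi; unfold I01 in *; lra).
  assert (I01 (psi 1)) by (apply Hin; unfold I01; lra). unfold I01 in *; lra.
Qed.

Lemma psi_mono (psi : R -> R) :
  (forall x y, I01 x -> I01 y -> x < y -> psi x < psi y) ->
  forall x y, I01 x -> I01 y -> x <= y -> psi x <= psi y.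
Proof.
  intros Hi x y Hx Hy Hxy. destruct (Req_dec x y) as [->|Hn]. lra.
  left; apply Hi; auto; lra.
Qed.

Lemma cont_within (psi d1 : R -> R) :
  (forall x, I01 x -> deriv_within psi I01 x (d1 x)) ->
  forall x, I01 x -> forall eps, 0 < eps -> exists delta, 0 < delta /\
    forall z, I01 z -> Rabs (z - x) < delta -> Rabs (psi z - psi x) < eps.
Proof.
  intros Hd x Hx eps He.
  destruct (Hd x Hx 1 ltac:(lra)) as [d0 [Hd0 H0]].
  set (d := d1 x) in *.
  assert (Hpos : 0 < Rabs d + 1) by (pose proof (Rabs_pos d); lra).
  exists (Rmin d0 (eps / (Rabs d + 1))). split.
  { apply Rmin_pos; auto. apply Rdiv_lt_0_compat; lra. }
  intros z Hz Hzx.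
  destruct (Req_dec z x) as [->|Hn].
  { replace (psi x - psi x) with 0 by ring. rewrite Rabs_R0; lra. }
  assert (Hh : z - x <> 0) by lra.
  assert (Hlt : Rabs (z - x) < d0) by (eapply Rlt_le_trans; [apply Hzx|apply Rmin_l]).
  assert (Hlt2 : Rabs (z - x) < eps / (Rabs d + 1)) by (eapply Rlt_le_trans; [apply Hzx|apply Rmin_r]).
  specialize (H0 (z - x) Hh Hlt). replace (x + (z - x)) with z in H0 by ring.
  specialize (H0 Hz).
  assert (Ha : 0 < Rabs (z - x)) by (apply Rabs_pos_lt; auto).
  assert (Q : Rabs ((psi z - psi x) / (z - x)) < Rabs d + 1).
  { pose proof (Rabs_triang ((psi z - psi x) / (z - x) - d) d).
    replace ((psi z - psi x) / (z - x) - d + d) with ((psi z - psi x) / (z - x)) in H by ring.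
    lra. }
  unfold Rdiv in Q; rewrite Rabs_mult, Rabs_inv in Q.
  apply Rmult_lt_compat_r with (r := Rabs (z - x)) in Q; auto.
  unfold Rdiv in Q. rewrite Rmult_assoc, Rinv_l in Q by lra. rewrite Rmult_1_r in Q.
  apply Rmult_lt_compat_l with (r := Rabs d + 1) in Hlt2; auto.
  replace ((Rabs d + 1) * (eps / (Rabs d + 1))) with eps in Hlt2 by (field; lra).
  lra.
Qed.

Definition cl (u : R) := Rmax 0 (Rmin 1 u).

Lemma cl_I01 u : I01 (cl u).
Proof. unfold cl, I01, Rmax, Rmin. repeat destruct Rle_dec; lra. Qed.

Lemma cl_id u : I01 u -> cl u = u.
Proof. unfold cl, I01, Rmax, Rmin. repeat destruct Rle_dec; lra. Qed.

Lemma cl_lip a b : Rabs (cl a - cl b) <= Rabs (a - b).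
Proof.
  unfold cl, Rmax, Rmin. repeat destruct Rle_dec;
  unfold Rabs; repeat destruct Rcase_abs; lra.
Qed.

Lemma psic_cont (psi d1 : R -> R) :
  (forall x, I01 x -> deriv_within psi I01 x (d1 x)) ->
  continuity (fun u => psi (cl u)).
Proof.
  intros Hd u. unfold continuity_pt, continue_in, limit1_in, limit_in. intros eps He.
  destruct (cont_within psi d1 Hd (cl u) (cl_I01 u) eps He) as [dl [Hdl H]].
  exists dl. split; auto. intros z [_ Hz]. simpl in *. idtac.
  unfold Rdist in *. apply H. apply cl_I01. eapply Rle_lt_trans; [apply cl_lip|exact Hz].
Qed.

Definition Ssum (f : R -> R) (v : list R) := fold_right Rplus 0 (map f v).

Lemma Ssum_le f g v : (forall x, In x v -> f x <= g x) -> Ssum f v <= Ssum g v.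
Proof.
  induction v; intros H; unfold Ssum in *; simpl in *. lra. assert (f a <= g a) by (apply H; left; auto).
  assert (fold_right Rplus 0 (map f v) <= fold_right Rplus 0 (map g v)) by (apply IHv; intros; apply H; right; auto). lra.
Qed.

Lemma Ssum_lt f g v : (forall x, In x v -> f x <= g x) ->
  (exists x, In x v /\ f x < g x) -> Ssum f v < Ssum g v.
Proof.
  induction v; intros H [x [Hx Hlt]]; unfold Ssum in *; simpl in *. contradiction. destruct Hx as [->|Hx].
  - assert (fold_right Rplus 0 (map f v) <= fold_right Rplus 0 (map g v))
      by (apply Ssum_le; intros; apply H; right; auto). lra.
  - assert (f a <= g a) by (apply H; left; auto).
    assert (fold_right Rplus 0 (map f v) < fold_right Rplus 0 (map g v))
      by (apply IHv; eauto). lra.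
Qed.

Lemma Ssum_ge f v a : (forall x, In x v -> 0 <= f x) -> In a v -> f a <= Ssum f v.
Proof.
  induction v; intros H Ha; unfold Ssum in *; simpl in *. contradiction. destruct Ha as [->|Ha].
  - assert (0 <= fold_right Rplus 0 (map f v)).
    { pose proof (Ssum_le (fun _ => 0) f v). unfold Ssum in H0.
      assert (fold_right Rplus 0 (map (fun _ : R => 0) v) = 0).
      { clear. induction v; simpl; auto. rewrite IHv; ring. }
      rewrite H1 in H0. apply H0. intros; apply H; right; auto. }
    lra.
  - assert (0 <= f a0) by (apply H; left; auto). assert (f a <= fold_right Rplus 0 (map f v)) by (apply IHv; auto; intros; apply H; right; auto). lra.
Qed.

Lemma Ssum_scale c f v : Ssum (fun x => c * f x) v = c * Ssum f v.
Proof. unfold Ssum; induction v; simpl. ring. rewrite IHv; ring. Qed.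

Lemma Ssum_app f u v : Ssum f (u ++ v) = Ssum f u + Ssum f v.
Proof. unfold Ssum; rewrite map_app, fold_right_app. induction u; simpl. ring.
  rewrite IHu; ring. Qed.

Lemma Ssum_ext f g v : (forall x, In x v -> f x = g x) -> Ssum f v = Ssum g v.
Proof. intros H; apply Rle_antisym; apply Ssum_le; intros x Hx; rewrite H; auto; lra. Qed.

Lemma max_elt (v : list R) : v <> [] -> exists a, In a v /\ forall x, In x v -> Rabs x <= Rabs a.
Proof.
  induction v as [|b v IH]; intros Hne. congruence.
  destruct v as [|c w].
  - exists b. split. left; auto. intros x [->|[]]. lra.
  - destruct IH as [a [Ha Hmax]]. congruence.
    destruct (Rle_dec (Rabs a) (Rabs b)).
    + exists b. split. left; auto. intros x [->|Hx]. lra. specialize (Hmax x Hx). lra.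
    + exists a. split. right; auto. intros x [->|Hx]. lra. auto.
Qed.

Lemma Ssum_zero (v : list R) : Ssum (fun _ => 0) v = 0.
Proof. unfold Ssum; induction v; simpl; auto. rewrite IHv; ring. Qed.

Lemma Ssum_cont (F : R -> R -> R) (v : list R) :
  (forall x, continuity (F x)) -> continuity (fun u => Ssum (fun x => F x u) v).
Proof.
  intros HF. induction v as [|a v IH]; unfold Ssum in *; simpl.
  - apply continuity_const. intros x y; auto.
  - exact (continuity_plus _ _ (HF a) IH).
Qed.

Lemma norm_exists (psi d1 : R -> R) :
  (forall x, I01 x -> I01 (psi x)) ->
  (forall y, I01 y -> exists x, I01 x /\ psi x = y) ->
  (forall x y, I01 x -> I01 y -> x < y -> psi x < psi y) ->
  (forall x, I01 x -> deriv_within psi I01 x (d1 x)) ->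
  forall v, exists s, psi_norm_rel psi v s.
Proof.
  intros Hin Hs Hi Hd v.
  pose proof (psi0 psi Hin Hs Hi) as P0. pose proof (psi1 psi Hin Hs Hi) as P1.
  destruct (classic (exists x, In x v /\ x <> 0)) as [Hex|Hno].
  2:{ exists 0. left. split; auto. intros x Hx. apply NNPP. intro. apply Hno; eauto. }
  assert (Hne : v <> []) by (intros ->; destruct Hex as [? [[] _]]).
  destruct (max_elt v Hne) as [a [Ha Hmax]].
  assert (HM : 0 < Rabs a).
  { destruct Hex as [x0 [Hx0 Hn0]]. specialize (Hmax x0 Hx0).
    pose proof (Rabs_pos_lt x0 Hn0). lra. }
  set (M := Rabs a) in *.
  set (G := fun u => Ssum (fun x => psi (cl (u * Rabs x))) v - 1).
  assert (Gc : continuity G).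
  { unfold G. apply continuity_minus. 2: apply continuity_const; intros ? ?; auto.
    apply (Ssum_cont (fun x u => psi (cl (u * Rabs x)))). intros x.
    apply (continuity_comp (fun u => u * Rabs x) (fun u => psi (cl u))).
    - apply continuity_mult. apply derivable_continuous, derivable_id.
      apply continuity_const; intros ? ?; auto.
    - eapply psic_cont; eauto. }
  assert (G0 : G 0 = -1).
  { unfold G. rewrite (Ssum_ext _ (fun _ => 0)). rewrite Ssum_zero; ring.
    intros x _. rewrite Rmult_0_l, cl_id, P0; auto. unfold I01; lra. }
  assert (GM : 0 <= G (/ M)).
  { unfold G. assert (1 <= Ssum (fun x => psi (cl (/ M * Rabs x))) v); [|lra].
    replace 1 with (psi (cl (/ M * Rabs a))).
    - apply (Ssum_ge (fun x => psi (cl (/ M * Rabs x)))); auto.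
      intros x _. destruct (Hin _ (cl_I01 (/ M * Rabs x))); auto.
    - fold M. rewrite Rinv_l, cl_id; auto; unfold I01; lra. }
  assert (Hz : exists z, 0 < z <= / M /\ G z = 0).
  { destruct (Req_dec (G (/ M)) 0) as [E|E].
    - exists (/ M). split; auto. split. apply Rinv_0_lt_compat; auto. lra.
    - destruct (IVT G 0 (/ M) Gc) as [z [Hz1 Hz2]].
      apply Rinv_0_lt_compat; auto. lra. lra.
      exists z. split; auto. split; try lra.
      destruct (Req_dec z 0) as [->|]; [rewrite G0 in Hz2; lra|lra]. }
  destruct Hz as [z [[Hz0 HzM] Gz]].
  assert (Hb : forall x, In x v -> 0 <= z * Rabs x <= 1).
  { intros x Hx. specialize (Hmax x Hx). split.
    apply Rmult_le_pos; [lra|apply Rabs_pos].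
    apply Rle_trans with (z * M). apply Rmult_le_compat_l; lra.
    apply Rmult_le_compat_r with (r := M) in HzM; [|lra].
    rewrite Rinv_l in HzM; lra. }
  exists (/ z). right. split; auto. split. apply Rinv_0_lt_compat; auto. split.
  - intros x Hx. unfold Rdiv. rewrite Rinv_inv, Rmult_comm. apply Hb; auto.
  - change (Ssum (fun x => psi (Rabs x / / z)) v = 1).
    unfold G in Gz. rewrite <- (Ssum_ext (fun x => psi (cl (z * Rabs x)))). lra.
    intros x Hx. rewrite cl_id. unfold Rdiv. rewrite Rinv_inv, Rmult_comm. auto.
    apply Hb; auto.
Qed.

Lemma uniq_aux (psi : R -> R) (v : list R) s1 s2 :
  (forall x y, I01 x -> I01 y -> x < y -> psi x < psi y) ->
  ((exists x, In x v /\ x <> 0) /\ 0 < s1 /\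
   (forall x, In x v -> Rabs x / s1 <= 1) /\
   fold_right Rplus 0 (map (fun x => psi (Rabs x / s1)) v) = 1) ->
  ((exists x, In x v /\ x <> 0) /\ 0 < s2 /\
   (forall x, In x v -> Rabs x / s2 <= 1) /\
   fold_right Rplus 0 (map (fun x => psi (Rabs x / s2)) v) = 1) ->
  s1 < s2 -> False.
Proof.
  intros Hi [Hex [H1 [B1 E1]]] [_ [H2 [B2 E2]]] Hlt.
  assert (Key : forall x, x <> 0 -> Rabs x / s2 < Rabs x / s1).
  { intros x Hx. pose proof (Rabs_pos_lt x Hx). unfold Rdiv.
    apply Rmult_lt_compat_l; auto. apply Rinv_lt_contravar; auto. nra. }
  assert (Hnn : forall x s, 0 < s -> 0 <= Rabs x / s).
  { intros x s Hs. unfold Rdiv. apply Rmult_le_pos. apply Rabs_pos. left; apply Rinv_0_lt_compat; auto. }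
  assert (Ssum (fun x => psi (Rabs x / s2)) v < Ssum (fun x => psi (Rabs x / s1)) v).
  { apply Ssum_lt.
    - intros x Hx. destruct (Req_dec x 0) as [->|Hn].
      + rewrite Rabs_R0. unfold Rdiv. rewrite !Rmult_0_l. lra.
      + left. apply Hi; [split; [apply Hnn; auto| apply B2; auto] | split; [apply Hnn; auto|apply B1; auto] | apply Key; auto].
    - destruct Hex as [x [Hx Hn]]. exists x. split; auto. apply Hi; [split; [apply Hnn; auto| apply B2; auto] | split; [apply Hnn; auto|apply B1; auto] | apply Key; auto]. }
  unfold Ssum in H. lra.
Qed.

Lemma norm_unique (psi : R -> R) (v : list R) s1 s2 :
  (forall x y, I01 x -> I01 y -> x < y -> psi x < psi y) ->
  psi_norm_rel psi v s1 -> psi_norm_rel psi v s2 -> s1 = s2.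
Proof.
  intros Hi [[Hz1 E1]|R1] [[Hz2 E2]|R2].
  - lra.
  - destruct R2 as [[x [Hx Hn]] _]. exfalso; apply Hn; auto.
  - destruct R1 as [[x [Hx Hn]] _]. exfalso; apply Hn; auto.
  - destruct (Rtotal_order s1 s2) as [L|[E|L]]; auto; exfalso.
    + apply (uniq_aux psi v s1 s2 Hi R1 R2 L).
    + apply (uniq_aux psi v s2 s1 Hi R2 R1 L).
Qed.

Lemma norm_eq (psi d1 : R -> R) :
  (forall x, I01 x -> I01 (psi x)) ->
  (forall y, I01 y -> exists x, I01 x /\ psi x = y) ->
  (forall x y, I01 x -> I01 y -> x < y -> psi x < psi y) ->
  (forall x, I01 x -> deriv_within psi I01 x (d1 x)) ->
  forall v, psi_norm_rel psi v (psi_norm psi v).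
Proof.
  intros Hin Hs Hi Hd v. unfold psi_norm. apply epsilon_spec.
  eapply norm_exists; eauto.
Qed.

From Coquelicot Require Coquelicot.
Module SM.
Import Coquelicot.Coquelicot.
Import ListNotations.
Open Scope R_scope.

Lemma deriv_int (f : R -> R) x l :
  deriv_within f I01 x l -> 0 < x < 1 -> is_derive f x l.
Proof.
  intros H Hx. apply is_derive_Reals. intros eps He.
  destruct (H eps He) as [d [Hd H']].
  assert (Hp : 0 < Rmin d (Rmin x (1 - x))).
  { apply Rmin_pos; auto. apply Rmin_pos; lra. }
  exists (mkposreal _ Hp). intros h Hh Hlt. simpl in Hlt.
  assert (Rabs h < d) by (eapply Rlt_le_trans; [apply Hlt|apply Rmin_l]).
  assert (Rabs h < Rmin x (1 - x)) by (eapply Rlt_le_trans; [apply Hlt|apply Rmin_r]).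
  assert (Rabs h < x) by (apply Rlt_le_trans with (Rmin x (1-x)); [assumption|apply Rmin_l]).
  assert (Rabs h < 1 - x) by (apply Rlt_le_trans with (Rmin x (1-x)); [assumption|apply Rmin_r]).
  apply H'; auto. unfold I01. unfold Rabs in *; destruct Rcase_abs; lra.
Qed.

Lemma supermult (psi d1 : R -> R) :
  (forall x, I01 x -> I01 (psi x)) ->
  (forall y, I01 y -> exists x, I01 x /\ psi x = y) ->
  (forall x y, I01 x -> I01 y -> x < y -> psi x < psi y) ->
  (forall x, I01 x -> deriv_within psi I01 x (d1 x)) ->
  (forall x y, 0 < x <= 1 -> 0 < y <= 1 -> x < y ->
     x * d1 x / psi x < y * d1 y / psi y) ->
  forall t x, I01 t -> I01 x -> psi t * psi x <= psi (t * x).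
Proof.
  intros Hin Hs Hi Hd Hq t x Ht Hx.
  pose proof (psi0 psi Hin Hs Hi) as P0. pose proof (psi1 psi Hin Hs Hi) as P1.
  assert (Ppos : forall s, 0 < s <= 1 -> 0 < psi s).
  { intros s Hs0. rewrite <- P0. apply Hi; unfold I01; lra. }
  assert (Tx : I01 (t * x)) by (unfold I01 in *; split; nra).
  destruct (Req_dec t 0) as [->|Ht0]. { rewrite P0, Rmult_0_l, Rmult_0_l, P0. lra. }
  destruct (Req_dec x 0) as [->|Hx0]. { rewrite P0, Rmult_0_r, Rmult_0_r, P0. lra. }
  destruct (Req_dec t 1) as [->|Ht1]. { rewrite P1, !Rmult_1_l. lra. }
  destruct (Req_dec x 1) as [->|Hx1]. { rewrite P1, !Rmult_1_r. lra. }
  unfold I01 in Ht, Hx.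
  assert (Ht' : 0 < t < 1) by lra. assert (Hx' : 0 < x < 1) by lra.
  clear Ht0 Hx0 Ht1 Hx1.
  set (q := fun s => psi (s * x) / psi s).
  set (df := fun c => (x * d1 (c * x) * psi c - psi (c * x) * d1 c) / psi c ^ 2).
  assert (Dq : forall c, 0 < c < 1 -> is_derive q c (df c)).
  { intros c Hc.
    assert (D1 : is_derive (fun s => psi (s * x)) c (x * d1 (c * x))).
    { assert (E : is_derive (fun s => s * x) c x).
      { auto_derive; auto; ring. }
      pose proof (is_derive_comp psi (fun s => s * x) c (d1 (c * x)) x) as K.
      apply K; auto. apply deriv_int. apply Hd. unfold I01; split; nra.
      split; nra. }
    apply (is_derive_div (fun s => psi (s * x)) psi c); auto.
    apply deriv_int; auto. apply Hd; unfold I01; lra.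
    assert (0 < psi c) by (apply Ppos; lra). lra. }
  assert (Dneg : forall c, 0 < c < 1 -> df c <= 0).
  { intros c Hc. unfold df.
    assert (A : 0 < psi (c * x)) by (apply Ppos; split; nra).
    assert (B : 0 < psi c) by (apply Ppos; lra).
    assert (Hlt := Hq (c * x) c ltac:(split; nra) ltac:(lra) ltac:(nra)).
    set (u := c * x * d1 (c * x) / psi (c * x)) in Hlt.
    set (w := c * d1 c / psi c) in Hlt.
    assert (Eu : c * x * d1 (c * x) = u * psi (c * x)) by (unfold u; field; lra).
    assert (Ew : c * d1 c = w * psi c) by (unfold w; field; lra).
    assert (N : c * (x * d1 (c * x) * psi c - psi (c * x) * d1 c) =
                psi (c * x) * psi c * (u - w)).
    { transitivity (c * x * d1 (c * x) * psi c - psi (c * x) * (c * d1 c)). ring.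
      rewrite Eu, Ew. ring. }
    assert (psi (c * x) * psi c * (u - w) < 0).
    { assert (0 < psi (c * x) * psi c) by nra. nra. }
    assert (x * d1 (c * x) * psi c - psi (c * x) * d1 c < 0) by nra.
    unfold Rdiv. assert (0 < / psi c ^ 2) by (apply Rinv_0_lt_compat; nra). nra. }
  assert (Hqb : forall b, t < b < 1 -> psi (b * x) <= q t).
  { intros b Hb.
    destruct (MVT_gen q t b df) as [c [Hc E]].
    - intros y Hy. rewrite Rmin_left, Rmax_right in Hy by lra. apply Dq; lra.
    - intros y Hy. rewrite Rmin_left, Rmax_right in Hy by lra.
      apply derivable_continuous_pt. exists (df y). apply is_derive_Reals, Dq; lra.
    - rewrite Rmin_left, Rmax_right in Hc by lra.
      assert (df c <= 0) by (apply Dneg; lra).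
      assert (q b <= q t) by nra.
      assert (psi (b * x) <= q b).
      { unfold q. assert (0 < psi b) by (apply Ppos; lra).
        assert (psi b <= 1) by (destruct (Hin b); unfold I01; lra).
        assert (0 <= psi (b * x)) by (destruct (Hin (b * x)); unfold I01; auto; split; nra).
        apply Rmult_le_reg_r with (psi b); auto. unfold Rdiv.
        rewrite Rmult_assoc, Rinv_l by lra. nra. }
      lra. }
  assert (Hqx : psi x <= q t).
  { apply Rnot_lt_le. intros Hc.
    destruct (cont_within psi d1 Hd x ltac:(unfold I01; lra) (psi x - q t) ltac:(lra))
      as [dl [Hdl Hcl]].
    set (b := Rmax ((1 + t) / 2) (1 - dl / 2)).
    assert (Hb1 : (1 + t) / 2 <= b) by apply Rmax_l.
    assert (Hb2 : 1 - dl / 2 <= b) by apply Rmax_r.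
    assert (Hb3 : b < 1) by (unfold b; apply Rmax_lub_lt; lra).
    assert (K := Hcl (b * x) ltac:(unfold I01; split; nra)).
    assert (Rabs (b * x - x) < dl).
    { rewrite Rabs_left by nra. nra. }
    specialize (K H).
    assert (psi (b * x) <= q t) by (apply Hqb; lra).
    unfold Rabs in K; destruct Rcase_abs in K; lra. }
  unfold q in Hqx. assert (0 < psi t) by (apply Ppos; lra).
  apply Rmult_le_compat_l with (r := psi t) in Hqx; [|lra].
  unfold Rdiv in Hqx. rewrite (Rmult_comm (psi (t * x))), <- Rmult_assoc, Rinv_r, Rmult_1_l in Hqx by lra.
  lra.
Qed.

End SM.
Import ListNotations.
Open Scope R_scope.

Lemma Ssum_repeat0 (f : R -> R) k : f 0 = 0 -> Ssum f (repeat 0 k) = 0.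
Proof. intros H; unfold Ssum; induction k; simpl; auto. rewrite IHk, H; ring. Qed.

Lemma div_nonneg x s : 0 < s -> 0 <= Rabs x / s.
Proof. intros Hs. unfold Rdiv. apply Rmult_le_pos. apply Rabs_pos. left; apply Rinv_0_lt_compat; auto. Qed.

Theorem lemma5p2 (psi d1 d2 d3 : R -> R) (n : nat) (r : R) :
  (forall x, I01 x -> I01 (psi x)) ->
  (forall y, I01 y -> exists x, I01 x /\ psi x = y) ->
  (forall x y, I01 x -> I01 y -> x < y -> psi x < psi y) ->
  (forall x y t, I01 x -> I01 y -> I01 t ->
     psi (t * x + (1 - t) * y) <= t * psi x + (1 - t) * psi y) ->
  (forall x, I01 x -> deriv_within psi I01 x (d1 x)) ->
  (forall x, I01 x -> deriv_within d1 I01 x (d2 x)) ->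
  (forall x, I01 x -> deriv_within d2 I01 x (d3 x)) ->
  (forall x, 0 < x <= 1 -> 0 < d1 x) ->
  (forall x y, 0 < x <= 1 -> 0 < y <= 1 -> x < y ->
     x * d1 x / psi x < y * d1 y / psi y) ->
  (forall x y, 0 < x <= 1 -> 0 < y <= 1 -> x < y ->
     x * d2 x / d1 x < y * d2 y / d1 y) ->
  (2 <= n)%nat ->
  0 <= r ->
  (exists y : list R, length y = (n - 1)%nat /\ (forall x, In x y -> 0 <= x) /\
     psi_norm psi y = 1 /\ psi_norm psi (y ++ [r]) = psi_norm psi [1; r]) /\
  (forall y : list R, length y = (n - 1)%nat -> (forall x, In x y -> 0 <= x) ->
     psi_norm psi y = 1 -> psi_norm psi [1; r] <= psi_norm psi (y ++ [r])).
Proof.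
  intros Hin Hs Hi Hcv Hd1 Hd2 Hd3 Hp Hq1 Hq2 Hn Hr.
  pose proof (psi0 psi Hin Hs Hi) as P0. pose proof (psi1 psi Hin Hs Hi) as P1.
  assert (NE := norm_eq psi d1 Hin Hs Hi Hd1).
  assert (NU : forall v a b, psi_norm_rel psi v a -> psi_norm_rel psi v b -> a = b) by (intros; eapply norm_unique; eauto).
  assert (Hmono := psi_mono psi Hi).
  set (s1 := psi_norm psi [1; r]).
  assert (R1 : psi_norm_rel psi [1; r] s1) by apply NE.
  destruct R1 as [[Hz _]|[_ [Hs1 [B1 E1]]]].
  { exfalso. assert (1 = 0) by (apply Hz; left; auto). lra. }
  simpl in E1. rewrite Rabs_R1, (Rabs_right r) in E1 by lra.
  assert (Bt : 1 / s1 <= 1) by (pose proof (B1 1 ltac:(left; auto)); rewrite Rabs_R1 in *; auto).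
  assert (Br : r / s1 <= 1) by (pose proof (B1 r ltac:(right; left; auto)); rewrite Rabs_right in * by lra; auto).
  split.
  - exists (1 :: repeat 0 (n - 2)). split.
    { simpl. rewrite repeat_length. lia. }
    split.
    { intros x [<-|Hx]. lra. apply repeat_spec in Hx. lra. }
    split.
    + apply (NU _ _ _ (NE _)). right. split.
      { exists 1. split. left; auto. lra. }
      split. lra. split.
      { intros x [<-|Hx]. rewrite Rabs_R1; lra. apply repeat_spec in Hx. subst.
        rewrite Rabs_R0; lra. }
      change (Ssum (fun x => psi (Rabs x / 1)) (1 :: repeat 0 (n - 2)) = 1).
      unfold Ssum. simpl. fold (Ssum (fun x => psi (Rabs x / 1)) (repeat 0 (n - 2))).
      rewrite Ssum_repeat0. rewrite Rabs_R1, Rdiv_1_r, P1. ring.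
      rewrite Rabs_R0, Rdiv_1_r; auto.
    + fold s1. apply (NU _ _ _ (NE _)). right. split.
      { exists 1. split. left; auto. lra. }
      split. lra. split.
      { intros x [<-|Hx]. rewrite Rabs_R1; lra. apply in_app_or in Hx. destruct Hx as [Hx|[<-|[]]].
        apply repeat_spec in Hx. subst. rewrite Rabs_R0. unfold Rdiv; rewrite Rmult_0_l; lra.
        rewrite Rabs_right by lra; auto. }
      change (Ssum (fun x => psi (Rabs x / s1)) ((1 :: repeat 0 (n - 2)) ++ [r]) = 1).
      rewrite Ssum_app. unfold Ssum at 1. simpl.
      fold (Ssum (fun x => psi (Rabs x / s1)) (repeat 0 (n - 2))).
      rewrite Ssum_repeat0. unfold Ssum; simpl. rewrite Rabs_R1, (Rabs_right r) by lra. lra.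
      rewrite Rabs_R0. unfold Rdiv; rewrite Rmult_0_l; auto.
  - intros y _ Hnn Hy1. fold s1.
    assert (Ry : psi_norm_rel psi y 1) by (rewrite <- Hy1; apply NE).
    destruct Ry as [[_ Hc]|[[y0 [Hy0 Hy0n]] [_ [By Ey]]]]. lra.
    set (s := psi_norm psi (y ++ [r])).
    assert (Rs : psi_norm_rel psi (y ++ [r]) s) by apply NE.
    destruct Rs as [[Hz _]|[_ [Hs0 [Bs Es]]]].
    { exfalso. apply Hy0n. apply Hz. apply in_or_app; auto. }
    apply Rnot_lt_le. intros Hlt.
    change (Ssum (fun x => psi (Rabs x / s)) (y ++ [r]) = 1) in Es.
    rewrite Ssum_app in Es. unfold Ssum at 2 in Es. simpl in Es.
    change (Ssum (fun x => psi (Rabs x / 1)) y = 1) in Ey.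
    set (t := / s1).
    assert (Ht : I01 t) by (unfold I01, t; split; [left; apply Rinv_0_lt_compat; auto|
       unfold Rdiv in Bt; lra]).
    assert (Hts : t < / s) by (apply Rinv_lt_contravar; nra).
    assert (Bx : forall x, In x y -> I01 (Rabs x)).
    { intros x Hx. specialize (By x Hx). rewrite Rdiv_1_r in By. split; auto. apply Rabs_pos. }
    assert (Bxs : forall x, In x y -> I01 (Rabs x / s)).
    { intros x Hx. split. apply div_nonneg; auto. apply Bs. apply in_or_app; auto. }
    assert (Btx : forall x, In x y -> I01 (t * Rabs x)).
    { intros x Hx. destruct (Bx x Hx). unfold I01 in Ht. split; nra. }
    assert (A : Ssum (fun x => psi (t * Rabs x)) y < Ssum (fun x => psi (Rabs x / s)) y).
    { apply Ssum_lt.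
      - intros x Hx. apply Hmono; auto. unfold Rdiv. rewrite Rmult_comm.
        apply Rmult_le_compat_l. apply Rabs_pos. lra.
      - exists y0. split; auto. apply Hi; auto. unfold Rdiv. rewrite Rmult_comm.
        apply Rmult_lt_compat_l; auto. apply Rabs_pos_lt; auto. }
    assert (B : psi t * 1 <= Ssum (fun x => psi (t * Rabs x)) y).
    { rewrite <- Ey, <- Ssum_scale. apply Ssum_le. intros x Hx. rewrite Rdiv_1_r.
      apply SM.supermult with d1; auto. }
    assert (C : psi (t * r) <= psi (Rabs r / s)).
    { rewrite Rabs_right by lra.
      assert (Hrs : r / s <= 1).
      { pose proof (Bs r ltac:(apply in_or_app; right; left; auto)).
        rewrite Rabs_right in H by lra. auto. }
      apply Hmono. unfold I01, t, Rdiv in *. split. apply Rmult_le_pos. left; apply Rinv_0_lt_compat; auto. lra.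
      rewrite Rmult_comm; auto.
      split; auto. unfold Rdiv; apply Rmult_le_pos. lra. left; apply Rinv_0_lt_compat; auto.
      unfold Rdiv. rewrite Rmult_comm. apply Rmult_le_compat_l; lra. }
    assert (Et : psi t + psi (t * r) = 1).
    { unfold t. rewrite Rmult_comm. unfold Rdiv in E1. rewrite Rmult_1_l in E1. lra. }
    lra.
Qed.
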